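(* Let $R$ be an associative ring with identity and $a,b,c,d\in R$ such that $a$ has a $(b,c)$-inverse $a^{\|(b,c)}$. Let $b^{-}$ be any (fixed) inner inverse of $b$ and put $e=bb^{-}$. Then the following are equivalent: (i) $d$ has a $(b,c)$-inverse; (ii) $e\in ea^{\|(b,c)}deR\cap Rea^{\|(b,c)}de$; (iii) $a^{\|(b,c)}de+1-e$ is invertible in $R$. In this case $d^{\|(b,c)}=(a^{\|(b,c)}de+1-e)^{-1}a^{\|(b,c)}$.
   Context: For $a,b,c\in R$, $a$ is $(b,c)$-invertible if there exists $y\in R$ with $y\in (bRy)\cap(yRc)$, $yab=b$ and $cay=c$; such $y$ is unique and denoted $a^{\|(b,c)}$. An inner inverse of $b$ is an element $b^{-}$ with $bb^{-}b=b$ (it exists here since $b$ is regular whenever a $(b,c)$-inverse exists). *)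

(* Defs.v *)
From HB Require Import structures.
From mathcomp Require Import all_boot all_order all_algebra.
Set Implicit Arguments. Unset Strict Implicit. Unset Printing Implicit Defensive.
Import GRing.Theory.
Local Open Scope ring_scope.

Definition is_bc_inverse (R : pzRingType) (a b c y : R) : Prop :=
  (exists r : R, y = b * r * y) /\ (exists s : R, y = y * s * c) /\
  y * a * b = b /\ c * a * y = c.

Definition bc_invertible (R : pzRingType) (a b c : R) : Prop :=
  exists y : R, is_bc_inverse a b c y.

Definition invertible (R : pzRingType) (x : R) : Prop :=
  exists w : R, w * x = 1 /\ x * w = 1.

(* Main.v *)
Require Import Defs.
From HB Require Import structures.
From mathcomp Require Import all_boot all_order all_algebra.
Import GRing.Theory.
Local Open Scope ring_scope.

Lemma corner_mul (R : pzRingType) (e p q : R) :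
  e * e = e -> p * e = p -> e * q = q ->
  (p + 1 - e) * (q + 1 - e) = p * q + (1 - e).
Proof.
move=> ee pe eq.
have h1 : p * (1 - e) = 0 by rewrite mulrBr mulr1 pe subrr.
have h2 : (1 - e) * q = 0 by rewrite mulrBl mul1r eq subrr.
have h3 : (1 - e) * (1 - e) = 1 - e.
  by rewrite mulrBr mulr1 mulrBl mul1r ee subrr subr0.
rewrite -!addrA mulrDl (mulrDr p q (1 - e)) (mulrDr (1 - e) q (1 - e)).
by rewrite h1 h2 h3 addr0 add0r.
Qed.

Lemma bc_unique (R : pzRingType) (d b c z1 z2 : R) :
  is_bc_inverse d b c z1 -> is_bc_inverse d b c z2 -> z1 = z2.
Proof.
rewrite /is_bc_inverse.
move=> [[r1 H1] [[s1 S1] [B1 C1]]] [[r2 H2] [[s2 S2] [B2 C2]]].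
have E1 : z1 = z2 * d * z1 by rewrite {1}H1 -{1}B2 -(mulrA _ b) -(mulrA _ (b * r1)) -H1.
have E2 : z2 = z2 * d * z1 by rewrite {1}S2 -{1}C1 !mulrA -S2.
by rewrite E1 -E2.
Qed.

Theorem theorem3p13 (R : pzRingType) (a b c d y bm : R) :
  is_bc_inverse a b c y -> b * bm * b = b ->
  let e := b * bm in
  (bc_invertible d b c <->
     exists u v : R, e = e * y * d * e * u /\ e = v * e * y * d * e) /\
  (bc_invertible d b c <-> invertible (y * d * e + 1 - e)) /\
  (forall z w : R, is_bc_inverse d b c z ->
     w * (y * d * e + 1 - e) = 1 -> (y * d * e + 1 - e) * w = 1 ->
     z = w * y).
Proof.
rewrite {1}/is_bc_inverse.
move=> [[r Hr] [[s Hs] [Hab Hca]]] Hb e.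
have ee : e * e = e by rewrite /e mulrA; congr (_ * _).
have eb : e * b = b by rewrite /e Hb.
have ey : e * y = y by rewrite {1}Hr !mulrA eb -Hr.
have yae : y * a * e = e by rewrite /e mulrA Hab.
have edef : e = b * bm by [].
clearbody e.
set p := y * d * e.
have ep : e * p = p by rewrite /p !mulrA ey.
have pe : p * e = p by rewrite /p -mulrA ee.
set x := p + 1 - e.
have xe : x * e = p.
  by rewrite /x mulrBl mulrDl mul1r ee pe addrK.
have ex : e * x = p.
  by rewrite /x mulrBr mulrDr mulr1 ee ep addrK.
have we_l : forall w, w * x = 1 -> x * w = 1 -> w * e = e * w.
  move=> w wx xw.
  have -> : w * e = w * (e * x) * w by rewrite -{1}[w * e]mulr1 -xw !mulrA.
  by rewrite ex -xe !mulrA wx mul1r.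
have iii_i : forall w, w * x = 1 -> x * w = 1 -> is_bc_inverse d b c (w * y).
  move=> w wx xw.
  have we := we_l w wx xw.
  have ez : e * (w * y) = w * y by rewrite mulrA -we -mulrA ey.
  have yd : y * d * (w * y) = y.
    have H : x * (w * y) = y by rewrite mulrA xw mul1r.
    move: H; rewrite /x mulrBl mulrDl mul1r ez addrK /p -(mulrA _ e) ez.
    by [].
  split; first by exists bm; rewrite -edef ez.
  split; first by exists s; rewrite -!mulrA (mulrA y s c) -Hs.
  split.
    rewrite -{1}eb.
    have -> : w * y * d * (e * b) = w * (x * e) * b by rewrite xe /p !mulrA.
    by rewrite !mulrA wx mul1r eb.
  by rewrite -[RHS]Hca -[in RHS]yd !mulrA Hca.
have i_iii : forall z, is_bc_inverse d b c z ->
    (z * a * e + 1 - e) * x = 1 /\ x * (z * a * e + 1 - e) = 1.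
  move=> z; rewrite {1}/is_bc_inverse; move=> [[r' Hr'] [[s' Hs'] [Hdb Hcd]]].
  have ez : e * z = z by rewrite {1}Hr' !mulrA eb -Hr'.
  have zde : z * d * e = e by rewrite edef mulrA Hdb.
  have ydz : y * d * z = y by rewrite [in RHS]Hs -[in RHS]Hcd !mulrA -Hs.
  have zay : z * a * y = z by rewrite [in RHS]Hs' -[in RHS]Hca !mulrA -Hs'.
  have q1 : (z * a * e) * e = z * a * e by rewrite -mulrA ee.
  have q2 : e * (z * a * e) = z * a * e by rewrite !mulrA ez.
  split.
    rewrite /x corner_mul //.
    have -> : z * a * e * p = z * a * (e * y) * d * e by rewrite /p !mulrA.
    by rewrite ey zay zde addrC subrK.
  rewrite /x corner_mul //.
  have -> : p * (z * a * e) = y * d * (e * z) * a * e by rewrite /p !mulrA.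
  by rewrite ez ydz yae addrC subrK.
have iii_ii : invertible x -> exists u v : R,
    e = e * y * d * e * u /\ e = v * e * y * d * e.
  move=> [w [wx xw]]; have we := we_l w wx xw.
  have E : e * y * d * e = p by rewrite ey.
  exists w, (e * w); split.
    by rewrite E -xe -mulrA -we mulrA xw mul1r.
  have -> : e * w * e * y * d * e = e * w * (e * y) * d * e by rewrite !mulrA.
  rewrite ey.
  have -> : e * w * y * d * e = e * (w * (x * e)) by rewrite xe /p !mulrA.
  by rewrite (mulrA w x e) wx mul1r ee.
have ii_iii : (exists u v : R,
    e = e * y * d * e * u /\ e = v * e * y * d * e) -> invertible x.
  move=> [u [v [Hu Hv]]].
  have Hu' : e = p * u by rewrite {1}Hu ey.
  have Hv' : e = v * p.
    rewrite {1}Hv -(mulrA v e y) ey.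
    have -> : v * y * d * e = v * (y * d * e) by rewrite !mulrA.
    by [].
  have [u' Ud] : exists u', u' = e * u * e by exists (e * u * e).
  have [v' Vd] : exists v', v' = e * v * e by exists (e * v * e).
  have pu : p * u' = e by rewrite Ud !mulrA pe -Hu' ee.
  have vp : v' * p = e by rewrite Vd -!mulrA ep -Hv' ee.
  have eu : e * u' = u' by rewrite Ud !mulrA ee.
  have ue : u' * e = u' by rewrite Ud -mulrA ee.
  have uv : u' = v'.
    have -> : v' = v' * (p * u') by rewrite pu Vd -(mulrA _ e e) ee.
    by rewrite mulrA vp eu.
  exists (u' + 1 - e); split.
    by rewrite /x corner_mul // uv vp addrC subrK.
  by rewrite /x corner_mul // pu addrC subrK.
have i_inv : bc_invertible d b c -> invertible x.
  move=> [z Hz]; exists (z * a * e + 1 - e); exact: i_iii.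
have inv_i : invertible x -> bc_invertible d b c.
  move=> [w [wx xw]]; exists (w * y); exact: iii_i.
split; last split.
- split; first by move/i_inv/iii_ii.
  by move/ii_iii/inv_i.
- by split.
move=> z w Hz wx xw; exact: bc_unique Hz (iii_i w wx xw).
Qed.
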